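(* Let $X$ be a connected, locally path connected space and $x_0\in X$. The following are equivalent: (1) $\pi_1^{wh}(X,x_0)$ is $T_0$; (2) $\pi_1^{wh}(X,x_0)$ is $T_1$; (3) $\pi_1^{wh}(X,x_0)$ is $T_2$; (4) $\pi_1^{wh}(X,x_0)$ is $T_3$ (regular and $T_1$); (5) $\pi^s_1(X,x_0)=1$; (6) $\pi_1^{wh}(X,x_0)$ is totally separated. Moreover, $\pi_1^{wh}(X,x_0)$ is always regular.
   Context: $\pi_1^{wh}(X,x_0)$ denotes $\pi_1(X,x_0)$ with the whisker topology, which has as a basis the sets $[\alpha]\,i_*\pi_1(U,x_0)$ for $[\alpha]\in\pi_1(X,x_0)$ and $U$ an open neighborhood of $x_0$ ($i_*$ induced by inclusion). A loop $\beta$ at $x_0$ is small if for every open neighborhood $U$ of $x_0$ it is homotopic rel endpoints to a loop in $U$; $\pi^s_1(X,x_0)$ is the set of homotopy classes of small loops at $x_0$. A space is totally separated if any two distinct points are separated by a clopen set containing one but not the other. Regular means: a point and a closed set not containing it have disjoint open neighborhoods. *)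

(* Defs.v *)
From Stdlib Require Import Reals.
Open Scope R_scope.
Unset Implicit Arguments.

Record topology (X : Type) := Topology {
  is_open : (X -> Prop) -> Prop;
  open_full : is_open (fun _ => True);
  open_inter : forall U V, is_open U -> is_open V -> is_open (fun x => U x /\ V x);
  open_union : forall F : (X -> Prop) -> Prop,
      (forall U, F U -> is_open U) -> is_open (fun x => exists U, F U /\ U x)
}.

Definition is_closed X (T : topology X) (C : X -> Prop) : Prop :=
  is_open X T (fun x => ~ C x).

Section Sep.
Variable (A : Type) (op : (A -> Prop) -> Prop).
Definition closed_in (C : A -> Prop) := op (fun x => ~ C x).
Definition T0_sp := forall a b : A, a <> b ->
  exists U, op U /\ ((U a /\ ~ U b) \/ (U b /\ ~ U a)).
Definition T1_sp := forall a b : A, a <> b -> exists U, op U /\ U a /\ ~ U b.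
Definition T2_sp := forall a b : A, a <> b ->
  exists U V, op U /\ op V /\ U a /\ V b /\ (forall x, U x -> V x -> False).
Definition regular_sp := forall (x : A) (C : A -> Prop), closed_in C -> ~ C x ->
  exists U V, op U /\ op V /\ U x /\ (forall y, C y -> V y) /\
              (forall y, U y -> V y -> False).
Definition T3_sp := regular_sp /\ T1_sp.
Definition totally_separated_sp := forall a b : A, a <> b ->
  exists U, op U /\ closed_in U /\ U a /\ ~ U b.
End Sep.

(** * Paths: functions R -> X, continuous on the unit interval [0,1]
    (with its subspace topology from R; values outside [0,1] are irrelevant). *)
Definition I01 (t : R) : Prop := 0 <= t <= 1.

Section Paths.
Variables (X : Type) (T : topology X).

Definition path_cont (f : R -> X) : Prop :=
  forall t, I01 t -> forall U, is_open X T U -> U (f t) ->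
  exists d, d > 0 /\ forall s, I01 s -> Rabs (s - t) < d -> U (f s).

(* continuity on [0,1] x [0,1] (product = max-metric topology) *)
Definition square_cont (H : R -> R -> X) : Prop :=
  forall s t, I01 s -> I01 t -> forall U, is_open X T U -> U (H s t) ->
  exists d, d > 0 /\ forall s' t', I01 s' -> I01 t' ->
     Rabs (s' - s) < d -> Rabs (t' - t) < d -> U (H s' t').

Definition is_path (f : R -> X) (a b : X) : Prop :=
  path_cont f /\ f 0 = a /\ f 1 = b.

Definition is_loop (x0 : X) (f : R -> X) : Prop := is_path f x0 x0.

Definition loop_homotopic (x0 : X) (f g : R -> X) : Prop :=
  exists H : R -> R -> X, square_cont H /\
    (forall t, I01 t -> H 0 t = f t /\ H 1 t = g t) /\
    (forall s, I01 s -> H s 0 = x0 /\ H s 1 = x0).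

Definition loop_in (U : X -> Prop) (f : R -> X) : Prop := forall t, I01 t -> U (f t).

Definition concat (f g : R -> X) : R -> X :=
  fun t => if Rle_dec t (1/2) then f (2 * t) else g (2 * t - 1).

Definition const_loop (x0 : X) : R -> X := fun _ => x0.

Definition hclass (x0 : X) (f : R -> X) : (R -> X) -> Prop :=
  fun g => is_loop x0 g /\ loop_homotopic x0 f g.

Definition pi1 (x0 : X) : Type :=
  { C : (R -> X) -> Prop | exists f, is_loop x0 f /\ C = hclass x0 f }.

(** Basic set  [alpha] i_* pi1(U,x0)  of the whisker topology. *)
Definition wh_basic (x0 : X) (alpha : R -> X) (U : X -> Prop) (c : pi1 x0) : Prop :=
  exists gamma, is_loop x0 gamma /\ loop_in U gamma /\ proj1_sig c (concat alpha gamma).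

Definition wh_open (x0 : X) (S : pi1 x0 -> Prop) : Prop :=
  forall c, S c -> exists alpha U, is_loop x0 alpha /\ is_open X T U /\ U x0 /\
     wh_basic x0 alpha U c /\ (forall d, wh_basic x0 alpha U d -> S d).

(** Small loops; pi_1^s(X,x0) = 1 means every small loop is null-homotopic. *)
Definition small_loop (x0 : X) (b : R -> X) : Prop :=
  is_loop x0 b /\ forall U, is_open X T U -> U x0 ->
     exists g, is_loop x0 g /\ loop_in U g /\ loop_homotopic x0 b g.

Definition small_pi1_trivial (x0 : X) : Prop :=
  forall b, small_loop x0 b -> loop_homotopic x0 (const_loop x0) b.

Definition connected_sp : Prop :=
  forall U, is_open X T U -> is_closed X T U -> (forall x, U x) \/ (forall x, ~ U x).

Definition path_connected_set (V : X -> Prop) : Prop :=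
  forall a b, V a -> V b -> exists f, is_path f a b /\ loop_in V f.

Definition locally_path_connected : Prop :=
  forall x U, is_open X T U -> U x ->
    exists V, is_open X T V /\ V x /\ (forall y, V y -> U y) /\ path_connected_set V.
End Paths.

(* Main.v *)
Require Import Defs.
From Stdlib Require Import Reals Lra Psatz Classical FunctionalExtensionality PropExtensionality ProofIrrelevance.
Open Scope R_scope.

Section Work.
Variables (X : Type) (T : topology X) (x0 : X).

Lemma I01_0 : I01 0. Proof. unfold I01; lra. Qed.
Lemma I01_1 : I01 1. Proof. unfold I01; lra. Qed.

Lemma sq_of_path f : path_cont X T f -> square_cont X T (fun _ t => f t).
Proof.
  intros Hf s t Hs Ht U HU Hu.
  destruct (Hf t Ht U HU Hu) as [d [Hd Hd']].
  exists d; split; auto.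
Qed.

Lemma path_of_sq h : square_cont X T (fun _ t => h t) -> path_cont X T h.
Proof.
  intros H t Ht U HU Hu.
  destruct (H 0 t I01_0 Ht U HU Hu) as [d [Hd Hd']].
  exists d; split; auto.
  intros s Hs Hst. apply (Hd' 0 s I01_0 Hs); auto.
  rewrite Rminus_0_r, Rabs_R0; lra.
Qed.

Lemma sq_swap K : square_cont X T K -> square_cont X T (fun s t => K t s).
Proof.
  intros H s t Hs Ht U HU Hu.
  destruct (H t s Ht Hs U HU Hu) as [d [Hd Hd']].
  exists d; split; auto.
Qed.

Lemma sq_flip K : square_cont X T K -> square_cont X T (fun s t => K (1 - s) t).
Proof.
  intros H s t Hs Ht U HU Hu.
  assert (Hs1 : I01 (1 - s)) by (unfold I01 in *; lra).
  destruct (H (1-s) t Hs1 Ht U HU Hu) as [d [Hd Hd']].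
  exists d; split; auto.
  intros s' t' Hs' Ht' H1 H2. apply Hd'; auto.
  - unfold I01 in *; lra.
  - replace (1 - s' - (1 - s)) with (-(s' - s)) by ring. rewrite Rabs_Ropp; auto.
Qed.

Lemma sq_glue A B : square_cont X T A -> square_cont X T B ->
  (forall s, I01 s -> A s 1 = B s 0) ->
  square_cont X T (fun s t => if Rle_dec t (1/2) then A s (2*t) else B s (2*t-1)).
Proof.
  intros HA HB HAB s t Hs Ht U HU Hu.
  destruct (Rtotal_order t (1/2)) as [Hlt|[Heq|Hgt]].
  - destruct (Rle_dec t (1/2)) as [_|n]; [|lra].
    assert (Ht2 : I01 (2*t)) by (unfold I01 in *; lra).
    destruct (HA s (2*t) Hs Ht2 U HU Hu) as [d [Hd Hd']].
    exists (Rmin (d/2) (1/2 - t)); split.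
    + apply Rmin_pos; lra.
    + intros s' t' Hs' Ht' H1 H2.
      pose proof (Rmin_l (d/2) (1/2 - t)); pose proof (Rmin_r (d/2) (1/2 - t)).
      apply Rabs_def2 in H1; apply Rabs_def2 in H2.
      destruct (Rle_dec t' (1/2)); [|lra].
      apply Hd'; auto.
      * unfold I01 in *; lra.
      * apply Rabs_def1; lra.
      * apply Rabs_def1; lra.
  - destruct (Rle_dec t (1/2)) as [_|n]; [|lra].
    rewrite Heq in Hu. replace (2 * (1/2)) with 1 in Hu by field.
    assert (HuB : U (B s 0)) by (rewrite <- HAB; auto).
    destruct (HA s 1 Hs I01_1 U HU Hu) as [dA [HdA HdA']].
    destruct (HB s 0 Hs I01_0 U HU HuB) as [dB [HdB HdB']].
    exists (Rmin dA dB / 2); split.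
    + pose proof (Rmin_pos dA dB HdA HdB); lra.
    + intros s' t' Hs' Ht' H1 H2.
      pose proof (Rmin_l dA dB); pose proof (Rmin_r dA dB).
      apply Rabs_def2 in H1; apply Rabs_def2 in H2.
      destruct (Rle_dec t' (1/2)).
      * apply HdA'; try (unfold I01 in *; lra); apply Rabs_def1; lra.
      * apply HdB'; try (unfold I01 in *; lra); apply Rabs_def1; lra.
  - destruct (Rle_dec t (1/2)) as [n|_]; [lra|].
    assert (Ht2 : I01 (2*t-1)) by (unfold I01 in *; lra).
    destruct (HB s (2*t-1) Hs Ht2 U HU Hu) as [d [Hd Hd']].
    exists (Rmin (d/2) (t - 1/2)); split.
    + apply Rmin_pos; lra.
    + intros s' t' Hs' Ht' H1 H2.
      pose proof (Rmin_l (d/2) (t - 1/2)); pose proof (Rmin_r (d/2) (t - 1/2)).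
      apply Rabs_def2 in H1; apply Rabs_def2 in H2.
      destruct (Rle_dec t' (1/2)); [lra|].
      apply Hd'; auto.
      * unfold I01 in *; lra.
      * apply Rabs_def1; lra.
      * apply Rabs_def1; lra.
Qed.

Lemma comp_sq f k L : path_cont X T f -> L > 0 ->
  (forall s t, I01 s -> I01 t -> I01 (k s t)) ->
  (forall s t s' t', I01 s -> I01 t -> I01 s' -> I01 t' ->
     Rabs (k s' t' - k s t) <= L * (Rabs (s' - s) + Rabs (t' - t))) ->
  square_cont X T (fun s t => f (k s t)).
Proof.
  intros Hf HL Hk HkL s t Hs Ht U HU Hu.
  destruct (Hf (k s t) (Hk s t Hs Ht) U HU Hu) as [d [Hd Hd']].
  exists (d / (2 * L)); split.
  - apply Rdiv_lt_0_compat; lra.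
  - intros s' t' Hs' Ht' H1 H2. apply Hd'. apply Hk; auto.
    eapply Rle_lt_trans. apply HkL; auto.
    assert (E : L * (d / (2 * L)) = d / 2) by (field; lra).
    assert (L * (Rabs (s' - s) + Rabs (t' - t)) < L * (d / (2*L) + d / (2*L)))
      by (apply Rmult_lt_compat_l; lra).
    lra.
Qed.

Lemma comp_path f k L : path_cont X T f -> L > 0 ->
  (forall t, I01 t -> I01 (k t)) ->
  (forall t t', I01 t -> I01 t' -> Rabs (k t' - k t) <= L * Rabs (t' - t)) ->
  path_cont X T (fun t => f (k t)).
Proof.
  intros Hf HL Hk HkL. apply path_of_sq.
  apply (comp_sq f (fun _ t => k t) L Hf HL); auto.
  intros. pose proof (HkL t t' H0 H2). pose proof (Rabs_pos (s' - s)). nra.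
Qed.

Notation lp := (is_loop X T x0).
Notation hom := (loop_homotopic X T x0).
Notation cat := (concat X).
Notation cst := (const_loop X x0).
Definition rev (f : R -> X) : R -> X := fun t => f (1 - t).

Lemma hrefl f : lp f -> hom f f.
Proof.
  intros [Hf [H0 H1]]. exists (fun _ t => f t). split; [apply sq_of_path; auto|].
  split; intros; auto.
Qed.

Lemma hsym f g : hom f g -> hom g f.
Proof.
  intros [H [Hc [He Hb]]]. exists (fun s t => H (1 - s) t).
  split; [apply sq_flip; auto|]. split.
  - intros t Ht. cbv beta. replace (1 - 0) with 1 by ring. replace (1 - 1) with 0 by ring.
    destruct (He t Ht); split; auto.
  - intros s Hs. apply Hb. unfold I01 in *; lra.
Qed.

Lemma htrans f g h : hom f g -> hom g h -> hom f h.
Proof.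
  intros [H1 [Hc1 [He1 Hb1]]] [H2 [Hc2 [He2 Hb2]]].
  exists (fun s t => if Rle_dec s (1/2) then H1 (2*s) t else H2 (2*s-1) t).
  split.
  - exact (sq_swap _ (sq_glue (fun s t => H1 t s) (fun s t => H2 t s) (sq_swap _ Hc1) (sq_swap _ Hc2)
      (fun s Hs => eq_trans (proj2 (He1 s Hs)) (eq_sym (proj1 (He2 s Hs)))))).
  - split.
    + intros t Ht. destruct (Rle_dec 0 (1/2)); [|lra]. destruct (Rle_dec 1 (1/2)); [lra|].
      replace (2*0) with 0 by ring. replace (2*1-1) with 1 by ring.
      split; [apply He1|apply He2]; auto.
    + intros s Hs. destruct (Rle_dec s (1/2)); [apply Hb1|apply Hb2]; unfold I01 in *; lra.
Qed.

Lemma hcat f f' g g' : hom f f' -> hom g g' -> hom (cat f g) (cat f' g').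
Proof.
  intros [H1 [Hc1 [He1 Hb1]]] [H2 [Hc2 [He2 Hb2]]].
  exists (fun s t => if Rle_dec t (1/2) then H1 s (2*t) else H2 s (2*t-1)).
  split.
  - apply sq_glue; auto. intros s Hs. rewrite (proj2 (Hb1 s Hs)), (proj1 (Hb2 s Hs)); auto.
  - split.
    + intros t Ht. unfold concat. destruct (Rle_dec t (1/2)).
      * apply He1; unfold I01 in *; lra.
      * apply He2; unfold I01 in *; lra.
    + intros s Hs. destruct (Rle_dec 0 (1/2)); [|lra]. destruct (Rle_dec 1 (1/2)); [lra|].
      replace (2*0) with 0 by ring. replace (2*1-1) with 1 by ring.
      split; [apply Hb1|apply Hb2]; auto.
Qed.

Lemma hext f g f' g' : hom f g -> (forall t, I01 t -> f t = f' t) ->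
  (forall t, I01 t -> g t = g' t) -> hom f' g'.
Proof.
  intros [H [Hc [He Hb]]] Ef Eg. exists H. split; auto. split; auto.
  intros t Ht. rewrite <- Ef, <- Eg; auto.
Qed.

Definition lip2 (p : R -> R) := (forall t, I01 t -> I01 (p t)) /\
  forall x y, I01 x -> I01 y -> Rabs (p y - p x) <= 2 * Rabs (y - x).

Lemma lip_bound a a' b b' s s' tau :
  0 <= a <= 1 -> 0 <= a' <= 1 -> 0 <= b <= 1 -> 0 <= b' <= 1 -> 0 <= s <= 1 -> 0 <= s' <= 1 ->
  Rabs (a' - a) <= 2 * tau -> Rabs (b' - b) <= 2 * tau ->
  Rabs (a' + s' * (b' - a') - (a + s * (b - a))) <= 6 * (Rabs (s' - s) + tau).
Proof.
  intros. replace (a' + s' * (b' - a') - (a + s * (b - a))) with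
    ((1 - s') * (a' - a) + s' * (b' - b) + (s' - s) * (b - a)) by ring.
  eapply Rle_trans. apply Rabs_triang.
  eapply Rle_trans. apply Rplus_le_compat_r. apply Rabs_triang.
  rewrite !Rabs_mult.
  rewrite (Rabs_pos_eq (1 - s')) by lra. rewrite (Rabs_pos_eq s') by lra.
  assert (Rabs (b - a) <= 1) by (apply Rabs_le; lra).
  pose proof (Rabs_pos (a' - a)). pose proof (Rabs_pos (b' - b)). pose proof (Rabs_pos (s' - s)).
  nra.
Qed.

Lemma hreparam f p q : path_cont X T f -> lip2 p -> lip2 q -> p 0 = q 0 -> p 1 = q 1 ->
  f (p 0) = x0 -> f (p 1) = x0 -> hom (fun t => f (p t)) (fun t => f (q t)).
Proof.
  intros Hf [Hp1 Hp2] [Hq1 Hq2] E0 E1 F0 F1.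
  exists (fun s t => f (p t + s * (q t - p t))). split.
  - apply (comp_sq f (fun s t => p t + s * (q t - p t)) 6 Hf); [lra| |].
    + intros s t Hs Ht. pose proof (Hp1 t Ht); pose proof (Hq1 t Ht). unfold I01 in *.
      split; nra.
    + intros s t s' t' Hs Ht Hs' Ht'.
      pose proof (Hp1 t Ht); pose proof (Hq1 t Ht); pose proof (Hp1 t' Ht'); pose proof (Hq1 t' Ht').
      unfold I01 in *. apply lip_bound; auto.
  - split.
    + intros t Ht. split; f_equal; ring.
    + intros s Hs. rewrite <- E0, <- E1. split.
      * replace (p 0 + s * (p 0 - p 0)) with (p 0) by ring; auto.
      * replace (p 1 + s * (p 1 - p 1)) with (p 1) by ring; auto.
Qed.

Ltac dec := repeat match goal with |- context [Rle_dec ?a ?b] => destruct (Rle_dec a b) end.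
Ltac absd := unfold Rabs; repeat match goal with |- context [Rcase_abs ?x] => destruct (Rcase_abs x) end.
Ltac liptac := split; [intros t Ht; unfold I01 in *; dec; split; lra
   | intros x y Hx Hy; unfold I01 in *; dec; absd; lra].

Lemma cst_loop : lp cst.
Proof.
  split; [|split; reflexivity].
  intros t Ht U HU Hu. exists 1; split; [lra|]. intros; exact Hu.
Qed.

Lemma cat_loop f g : lp f -> lp g -> lp (cat f g).
Proof.
  intros [Hf [Hf0 Hf1]] [Hg [Hg0 Hg1]]. split; [|split].
  - apply path_of_sq. unfold concat.
    apply (sq_glue (fun _ t => f t) (fun _ t => g t) (sq_of_path f Hf) (sq_of_path g Hg)).
    intros; congruence.
  - unfold concat. dec; [|lra]. replace (2*0) with 0 by ring; auto.
  - unfold concat. dec; [lra|]. replace (2*1-1) with 1 by ring; auto.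
Qed.

Lemma rev_loop f : lp f -> lp (rev f).
Proof.
  intros [Hf [Hf0 Hf1]]. split; [|split].
  - apply (comp_path f (fun t => 1 - t) 1 Hf); [lra| |].
    + intros; unfold I01 in *; lra.
    + intros. replace (1 - t' - (1 - t)) with (-(t' - t)) by ring. rewrite Rabs_Ropp; lra.
  - unfold rev. replace (1-0) with 1 by ring; auto.
  - unfold rev. replace (1-1) with 0 by ring; auto.
Qed.

Lemma cat_in U f g : loop_in X U f -> loop_in X U g -> loop_in X U (cat f g).
Proof.
  intros Hf Hg t Ht. unfold concat. dec; [apply Hf|apply Hg]; unfold I01 in *; lra.
Qed.

Lemma rev_in U f : loop_in X U f -> loop_in X U (rev f).
Proof. intros Hf t Ht. apply Hf. unfold I01 in *; lra. Qed.

Lemma cst_in (U : X -> Prop) : U x0 -> loop_in X U cst.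
Proof. intros H t _; exact H. Qed.

Definition idp (t : R) := t.
Lemma lip_id : lip2 idp.
Proof. unfold idp; split; intros; unfold I01 in *; auto. absd; lra. Qed.

Definition rid_p t := if Rle_dec t (1/2) then 2*t else 1.
Definition lid_p t := if Rle_dec t (1/2) then 0 else 2*t-1.
Definition tent t := if Rle_dec t (1/2) then 2*t else 2-2*t.
Definition zer (t : R) := 0.
Definition asc t := if Rle_dec t (1/4) then 2*t else if Rle_dec t (1/2) then t + 1/4 else (t+1)/2.

Lemma lip_rid : lip2 rid_p. Proof. unfold rid_p; liptac. Qed.
Lemma lip_lid : lip2 lid_p. Proof. unfold lid_p; liptac. Qed.
Lemma lip_tent : lip2 tent. Proof. unfold tent; liptac. Qed.
Lemma lip_zer : lip2 zer. Proof. unfold zer; liptac. Qed.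
Lemma lip_asc : lip2 asc. Proof. unfold asc; liptac. Qed.

Ltac ptw := unfold concat, rev, const_loop, idp, rid_p, lid_p, tent, zer, asc; dec;
  first [reflexivity | exfalso; lra | f_equal; lra | idtac].

Lemma rid f : lp f -> hom (cat f cst) f.
Proof.
  intros Hl. pose proof Hl as [Hf [Hf0 Hf1]].
  apply (hext (fun t => f (rid_p t)) (fun t => f (idp t))).
  - apply hreparam; auto using lip_rid, lip_id; unfold rid_p, idp; dec; try lra;
      replace (2*0) with 0 by ring; auto.
  - intros t Ht. ptw. auto.
  - intros; reflexivity.
Qed.

Lemma lid f : lp f -> hom (cat cst f) f.
Proof.
  intros Hl. pose proof Hl as [Hf [Hf0 Hf1]].
  apply (hext (fun t => f (lid_p t)) (fun t => f (idp t))).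
  - apply hreparam; auto using lip_lid, lip_id; unfold lid_p, idp; dec; try lra;
      try replace (2*1-1) with 1 by ring; auto.
  - intros t Ht. ptw. auto.
  - intros; reflexivity.
Qed.

Lemma rinv f : lp f -> hom (cat f (rev f)) cst.
Proof.
  intros Hl. pose proof Hl as [Hf [Hf0 Hf1]].
  apply (hext (fun t => f (tent t)) (fun t => f (zer t))).
  - apply hreparam; auto using lip_tent, lip_zer; unfold tent, zer; dec; try lra;
      try replace (2*0) with 0 by ring; try replace (2-2*1) with 0 by ring; auto.
  - intros t Ht. ptw.
  - intros; unfold zer, const_loop; auto.
Qed.

Lemma linv f : lp f -> hom (cat (rev f) f) cst.
Proof.
  intros Hl. apply (hext (cat (rev f) (rev (rev f))) cst).
  - apply rinv, rev_loop; auto.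
  - intros t Ht. ptw.
  - reflexivity.
Qed.

Lemma assoc f g h : lp f -> lp g -> lp h -> hom (cat (cat f g) h) (cat f (cat g h)).
Proof.
  intros Hf Hg Hh. pose proof (cat_loop _ _ Hf (cat_loop _ _ Hg Hh)) as [HF [HF0 HF1]].
  apply (hext (fun t => cat f (cat g h) (asc t)) (fun t => cat f (cat g h) (idp t))).
  - apply hreparam; auto using lip_asc, lip_id; unfold asc, idp; dec; try lra;
      try replace (2*0) with 0 by ring; try replace ((1+1)/2) with 1 by field; auto.
  - intros t Ht. ptw.
  - intros; reflexivity.
Qed.

Notation P1 := (pi1 X T x0).
Notation wb := (wh_basic X T x0).
Notation wo := (wh_open X T x0).

Lemma cls_rep (c : P1) : exists f, lp f /\ forall g, proj1_sig c g <-> lp g /\ hom f g.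
Proof.
  destruct c as [C [f [Hf E]]]. subst C. exists f; split; auto.
  intro g; simpl; unfold hclass; tauto.
Qed.

Lemma mem_loop (c : P1) g : proj1_sig c g -> lp g.
Proof. intros H. destruct (cls_rep c) as [f [Hf E]]. apply E in H; tauto. Qed.

Lemma mem_trans (c : P1) g h : proj1_sig c g -> hom g h -> lp h -> proj1_sig c h.
Proof.
  intros H Hgh Hh. destruct (cls_rep c) as [f [Hf E]]. apply E in H. apply E.
  split; auto. eapply htrans; [apply H|auto].
Qed.

Lemma mem_hom (c : P1) g h : proj1_sig c g -> proj1_sig c h -> hom g h.
Proof.
  intros H1 H2. destruct (cls_rep c) as [f [Hf E]]. apply E in H1. apply E in H2.
  eapply htrans; [apply hsym; apply H1|apply H2].
Qed.

Lemma pi1_ext (c d : P1) : (forall g, proj1_sig c g <-> proj1_sig d g) -> c = d.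
Proof.
  destruct c as [C HC], d as [D HD]; simpl; intros H.
  assert (C = D) by (apply functional_extensionality; intro g; apply propositional_extensionality; auto).
  subst D. f_equal. apply proof_irrelevance.
Qed.

Definition cls f (Hf : lp f) : P1 := exist _ (hclass X T x0 f) (ex_intro _ f (conj Hf eq_refl)).

Lemma basic_open a U : lp a -> is_open X T U -> U x0 -> wo (wb a U).
Proof.
  intros Ha HU Hx c [g [Hg [HgU Hc]]].
  exists (cat a g), U. split; [apply cat_loop; auto|]. split; auto. split; auto. split.
  - exists cst. split; [apply cst_loop|]. split; [apply cst_in; auto|].
    apply (mem_trans c _ _ Hc); [apply hsym; apply rid|]; auto using cat_loop, cst_loop.
  - intros d [e [He [HeU Hd]]]. exists (cat g e). split; [apply cat_loop; auto|].
    split; [apply cat_in; auto|].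
    apply (mem_trans d _ _ Hd); [apply assoc|]; auto using cat_loop.
Qed.

Lemma basic_compl_open a U : lp a -> is_open X T U -> U x0 -> wo (fun c => ~ wb a U c).
Proof.
  intros Ha HU Hx c Hnc. destruct (cls_rep c) as [f [Hf E]].
  assert (Hcf : proj1_sig c f) by (apply E; split; auto using hrefl).
  exists f, U. split; auto. split; auto. split; auto. split.
  - exists cst. split; [apply cst_loop|]. split; [apply cst_in; auto|].
    apply (mem_trans c _ _ Hcf); [apply hsym; apply rid|]; auto using cat_loop, cst_loop.
  - intros e [d [Hd [HdU He]]] [g [Hg [HgU He']]]. apply Hnc.
    exists (cat g (rev d)). split; [apply cat_loop; auto using rev_loop|].
    split; [apply cat_in; auto using rev_in|].
    apply (mem_trans c _ _ Hcf); [|auto using cat_loop, rev_loop].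
    assert (Hrd := rev_loop d Hd).
    eapply htrans; [apply hsym; apply rid; auto|].
    eapply htrans; [apply hcat; [apply hrefl; auto| apply hsym; apply (rinv d); auto]|].
    eapply htrans; [apply hsym; apply assoc; auto|].
    eapply htrans; [apply hcat; [apply (mem_hom e _ _ He He')| apply hrefl; auto]|].
    apply assoc; auto.
Qed.

Lemma regular : regular_sp P1 wo.
Proof.
  intros c C HC Hc. destruct (HC c Hc) as [a [U [Ha [HU [Hx [Hb Hsub]]]]]].
  exists (wb a U), (fun d => ~ wb a U d). split; [apply basic_open; auto|].
  split; [apply basic_compl_open; auto|]. split; auto. split.
  - intros y Cy By. exact (Hsub y By Cy).
  - intros y H1 H2; auto.
Qed.

Lemma small_sep : small_pi1_trivial X T x0 -> forall a b : P1, a <> b ->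
  exists al U, lp al /\ is_open X T U /\ U x0 /\ wb al U a /\ ~ wb al U b.
Proof.
  intros Hs a b Hab.
  destruct (cls_rep a) as [fa [Hfa Ea]]. destruct (cls_rep b) as [fb [Hfb Eb]].
  assert (Hbfb : proj1_sig b fb) by (apply Eb; split; auto using hrefl).
  assert (Hafa : proj1_sig a fa) by (apply Ea; split; auto using hrefl).
  destruct (classic (exists U, is_open X T U /\ U x0 /\ ~ wb fa U b)) as [[U [HU [Hx Hn]]]|Hn].
  - exists fa, U. split; auto. split; auto. split; auto. split; auto.
    exists cst. split; [apply cst_loop|]. split; [apply cst_in; auto|].
    apply (mem_trans a _ _ Hafa); [apply hsym; apply rid|]; auto using cat_loop, cst_loop.
  - exfalso. apply Hab.
    assert (HU : forall U, is_open X T U -> U x0 -> wb fa U b)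
      by (intros U HU Hx; apply NNPP; intro; apply Hn; eauto).
    assert (Hra := rev_loop fa Hfa).
    assert (Hsm : small_loop X T x0 (cat (rev fa) fb)).
    { split; [apply cat_loop; auto|]. intros U HU' Hx.
      destruct (HU U HU' Hx) as [g [Hg [HgU Hbg]]].
      exists g. split; auto. split; auto.
      eapply htrans; [apply hcat; [apply hrefl; auto| apply (mem_hom b _ _ Hbfb Hbg)]|].
      eapply htrans; [apply hsym; apply assoc; auto|].
      eapply htrans; [apply hcat; [apply linv; auto| apply hrefl; auto]|].
      apply lid; auto. }
    apply Hs in Hsm.
    assert (Hab' : hom fa fb).
    { eapply htrans; [apply hsym; apply rid; auto|].
      eapply htrans; [apply hcat; [apply hrefl; auto| apply Hsm]|].
      eapply htrans; [apply hsym; apply assoc; auto|].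
      eapply htrans; [apply hcat; [apply rinv; auto| apply hrefl; auto]|].
      apply lid; auto. }
    apply pi1_ext. intro g. rewrite Ea, Eb. split; intros [Hg Hh]; split; auto.
    + eapply htrans; [apply hsym; apply Hab'|exact Hh].
    + eapply htrans; [apply Hab'|exact Hh].
Qed.

Lemma T0_small : T0_sp P1 wo -> small_pi1_trivial X T x0.
Proof.
  intros H0 b Hb. destruct (classic (hom cst b)) as [|Hn]; auto. exfalso.
  pose proof Hb as [Hbl Hsmall].
  set (cb := cls b Hbl). set (cc := cls cst cst_loop).
  assert (Hne : cb <> cc).
  { intro E. apply Hn. assert (Hm : proj1_sig cb b) by (simpl; split; auto using hrefl).
    rewrite E in Hm. destruct Hm; auto. }
  destruct (H0 cb cc Hne) as [S [HS [[Sb nSc]|[Sc nSb]]]].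
  - destruct (HS cb Sb) as [a [U [Ha [HU [Hx [[g0 [Hg0 [Hg0U Hcb]]] Hsub]]]]]].
    destruct (Hsmall U HU Hx) as [g [Hg [HgU Hbg]]].
    apply nSc, Hsub. exists (cat g0 (rev g)).
    split; [apply cat_loop; auto using rev_loop|]. split; [apply cat_in; auto using rev_in|].
    simpl. split; [apply cat_loop; auto using cat_loop, rev_loop|].
    assert (Hrg := rev_loop g Hg). simpl in Hcb. destruct Hcb as [_ Hcb].
    eapply htrans; [apply hsym; apply (rinv g); auto|].
    eapply htrans; [apply hcat; [apply hsym; apply Hbg| apply hrefl; auto]|].
    eapply htrans; [apply hcat; [apply Hcb| apply hrefl; auto]|].
    apply assoc; auto.
  - destruct (HS cc Sc) as [a [U [Ha [HU [Hx [[g0 [Hg0 [Hg0U Hcc]]] Hsub]]]]]].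
    destruct (Hsmall U HU Hx) as [g [Hg [HgU Hbg]]].
    apply nSb, Hsub. exists (cat g0 g).
    split; [apply cat_loop; auto|]. split; [apply cat_in; auto|].
    simpl. split; [apply cat_loop; auto using cat_loop|].
    simpl in Hcc. destruct Hcc as [_ Hcc].
    eapply htrans; [apply Hbg|].
    eapply htrans; [apply hsym; apply lid; auto|].
    eapply htrans; [apply hcat; [apply Hcc| apply hrefl; auto]|].
    apply assoc; auto.
Qed.

End Work.

Theorem proposition3p3 (X : Type) (T : topology X) (x0 : X) :
  connected_sp X T -> locally_path_connected X T ->
  ((T0_sp (pi1 X T x0) (wh_open X T x0) <-> T1_sp (pi1 X T x0) (wh_open X T x0)) /\
   (T0_sp (pi1 X T x0) (wh_open X T x0) <-> T2_sp (pi1 X T x0) (wh_open X T x0)) /\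
   (T0_sp (pi1 X T x0) (wh_open X T x0) <-> T3_sp (pi1 X T x0) (wh_open X T x0)) /\
   (T0_sp (pi1 X T x0) (wh_open X T x0) <-> small_pi1_trivial X T x0) /\
   (T0_sp (pi1 X T x0) (wh_open X T x0) <-> totally_separated_sp (pi1 X T x0) (wh_open X T x0))) /\
  regular_sp (pi1 X T x0) (wh_open X T x0).
Proof.
  intros _ _.
  assert (Hreg := regular X T x0).
  assert (T1 : small_pi1_trivial X T x0 -> T1_sp (pi1 X T x0) (wh_open X T x0)).
  { intros Hs a b Hab. destruct (small_sep X T x0 Hs a b Hab) as [al [U [Ha [HU [Hx [H1 H2]]]]]].
    exists (wh_basic X T x0 al U). split; auto. apply basic_open; auto. }
  assert (T2 : small_pi1_trivial X T x0 -> T2_sp (pi1 X T x0) (wh_open X T x0)).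
  { intros Hs a b Hab. destruct (small_sep X T x0 Hs a b Hab) as [al [U [Ha [HU [Hx [H1 H2]]]]]].
    exists (wh_basic X T x0 al U), (fun c => ~ wh_basic X T x0 al U c).
    split; [apply basic_open; auto|]. split; [apply basic_compl_open; auto|].
    split; auto. }
  assert (TS : small_pi1_trivial X T x0 -> totally_separated_sp (pi1 X T x0) (wh_open X T x0)).
  { intros Hs a b Hab. destruct (small_sep X T x0 Hs a b Hab) as [al [U [Ha [HU [Hx [H1 H2]]]]]].
    exists (wh_basic X T x0 al U). split; [apply basic_open; auto|].
    split; [apply basic_compl_open; auto|]. split; auto. }
  assert (S0 := T0_small X T x0).
  split; [|exact Hreg].
  split; [split; [intro H; apply T1, S0, H| intros H a b Hab; destruct (H a b Hab) as [U [HU [Ha Hb]]]; exists U; auto]|].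
  split; [split; [intro H; apply T2, S0, H| intros H a b Hab; destruct (H a b Hab) as [U [V [HU [HV [Ha [Hb Hd]]]]]]; exists U; split; auto; left; split; eauto]|].
  split; [split; [intro H; split; [exact Hreg| apply T1, S0, H]| intros [_ H] a b Hab; destruct (H a b Hab) as [U [HU [Ha Hb]]]; exists U; auto]|].
  split; [split; [exact S0| intro H; intros a b Hab; destruct (T1 H a b Hab) as [U [HU [Ha Hb]]]; exists U; auto]|].
  split; [intro H; apply TS, S0, H| intros H a b Hab; destruct (H a b Hab) as [U [HU [_ [Ha Hb]]]]; exists U; auto].
Qed.
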